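(* Let $k$ be a non-negative integer, $m=4k+2$, and let $f$ be a natural number such that $\gcd(f,4m)=2$, $\gcd(f-1,4m)=1$, and $f^2+f-2\equiv 2m \pmod{4m}$. Then there exists a cyclic DCA$(4,4m+1;4m)$ satisfying P1 and P2.
   Context: Let $(G,+)$ be an abelian group of order $n$. A difference covering array DCA$(k,\eta;n)$ over $G$ is an $\eta\times k$ matrix $Q=[q(i,j)]$ (rows indexed $0,\dots,\eta-1$, columns $0,\dots,k-1$) with entries in $G$ such that for every pair of distinct columns $j,j'$ the multiset $\{q(i,j)-q(i,j') : 0\le i\le \eta-1\}$ contains every element of $G$ at least once. It is cyclic if $G=\mathbb{Z}_n$. A DCA$(k,n+1;n)$ is taken in normalized form: all entries of its last row (row $n$) and of its last column (column $k-1$) equal $0$. Such a DCA satisfies P1 if $0$ occurs at least twice in every column, and satisfies P2 if for all distinct columns $j,j'$ with $j\neq k-1\neq j'$, the set $\{q(i,j)-q(i,j') : 0\le i\le n-1\}$ equals $G\setminus\{0\}$. *)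

(* Defs.v *)
From mathcomp Require Import all_boot all_order all_algebra.
Set Implicit Arguments. Unset Strict Implicit. Unset Printing Implicit Defensive.
Import GRing.Theory.
Local Open Scope ring_scope.

Definition is_DCA (G : finZmodType) (k eta : nat) (Q : 'M[G]_(eta, k)) : Prop :=
  forall j j' : 'I_k, j != j' ->
    forall g : G, exists i : 'I_eta, Q i j - Q i j' = g.

Definition normalized (G : finZmodType) (k n : nat) (Q : 'M[G]_(n.+1, k)) : Prop :=
  (forall j : 'I_k, Q ord_max j = 0) /\
  (forall i : 'I_n.+1, forall j : 'I_k, (j : nat) = k.-1 -> Q i j = 0).

Definition P1 (G : finZmodType) (k eta : nat) (Q : 'M[G]_(eta, k)) : Prop :=
  forall j : 'I_k, (2 <= #|[set i : 'I_eta | Q i j == 0%R]|)%N.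

Definition P2 (G : finZmodType) (k n : nat) (Q : 'M[G]_(n.+1, k)) : Prop :=
  forall j j' : 'I_k, j != j' -> (j : nat) != k.-1 -> (j' : nat) != k.-1 ->
    [set Q i j - Q i j' | i : 'I_n.+1 & ((i : nat) < n)%N] = [set g : G | g != 0].

(* Main.v *)
Require Import Defs.
From mathcomp Require Import all_boot all_order all_algebra.
From mathcomp Require Import zify ring.
Import GRing.Theory.
Local Open Scope ring_scope.

Ltac splitifs := repeat match goal with |- context [if (?a < ?b)%N then _ else _] => case: (ltnP a b) => ? /= end.

Lemma Zp_mod_eq n (a b : nat) : (1 < n)%N -> (a %% n = b %% n)%N -> (a%:R : 'Z_n) = b%:R.
Proof. move=> hn h; rewrite !Zp_nat; apply: val_inj => /=; by rewrite Zp_cast. Qed.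

Lemma Zp_eq_mod n (a b : nat) : (1 < n)%N -> (a%:R : 'Z_n) = b%:R -> (a %% n = b %% n)%N.
Proof. move=> hn; rewrite !Zp_nat => /(congr1 val) /=; by rewrite Zp_cast. Qed.

Arguments Zp_mod_eq {n a b}.
Arguments Zp_eq_mod {n a b}.
Lemma Zp_val n (x : 'Z_n) : (1 < n)%N -> (val x < n)%N /\ (val x)%:R = x.
Proof. move=> hn; split; first by case: x => v hv /=; rewrite Zp_cast in hv. exact: natr_Zp. Qed.

Lemma mod2 n a : (a < 2 * n)%N -> (a %% n = if a < n then a else a - n)%N.
Proof.
case: (ltnP a n) => h ha; first by rewrite modn_small.
by rewrite -{1}(subnK h) modnDr modn_small //; lia.
Qed.

Arguments mod2 {n a}.
Lemma cover_full n (u : 'Z_n) (psi : nat -> nat) : (1 < n)%N -> u \is a GRing.unit ->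
  (forall x, x < n -> psi x < 2 * n)%N ->
  (forall x y, x < n -> y < n -> psi x = psi y \/ psi x = psi y + n \/ psi y = psi x + n -> x = y)%N ->
  forall g : 'Z_n, exists2 x, (x < n)%N & u * (psi x)%:R = g.
Proof.
move=> hn hu hb hi g.
pose h (x : 'I_n) : 'Z_n := (psi x)%:R.
have hinj : injective h.
  move=> [x hxn] [y hyn] /(Zp_eq_mod hn) /= e; apply: val_inj => /=; apply: hi => //.
  have hx := hb x hxn; have hy := hb y hyn.
  move: e; rewrite (mod2 hx) (mod2 hy).
  case: (ltnP (psi x) n); case: (ltnP (psi y) n); lia.
have : u^-1 * g \in codom h by apply: inj_card_onto => //; by rewrite !card_ord Zp_cast.
case/codomP => x hx; exists x => //; by rewrite /h in hx; rewrite -hx mulrA divrr // mul1r.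
Qed.

Lemma cover_near n (u : 'Z_n) (psi : nat -> nat) x0 : (1 < n)%N -> u \is a GRing.unit -> (x0 < n)%N ->
  (forall x, x < n -> 0 < psi x < n)%N ->
  (forall x y, x < n -> y < n -> x != x0 -> y != x0 -> psi x = psi y -> x = y)%N ->
  (forall x, (x < n)%N -> u * (psi x)%:R != 0) /\
  (forall g : 'Z_n, g != 0 -> exists2 x, (x < n)%N & u * (psi x)%:R = g).
Proof.
move=> hn hu hx0 hb hi; split.
  move=> x hx; apply/eqP => e.
  have : (psi x)%:R = 0 :> 'Z_n by rewrite -[_%:R](mulKr hu) e mulr0.
  rewrite -(mulr0n 1) => /(Zp_eq_mod hn); rewrite mod0n modn_small; have := hb x hx; lia.
move=> g hg.
have [||x hx e] := @cover_full n u (fun x => if x == x0 then 0%N else psi x) hn hu _ _ g.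
- move=> x hx; case: eqP => _; have := hb x hx; lia.
- move=> x y hx hy; have := hb x hx; have := hb y hy; have := hi x y hx hy.
  case: eqP => ex; case: eqP => ey; lia.
exists x => //; move: e; case: eqP => _ //.
by rewrite mulr0 => e; move: hg; rewrite -e eqxx.
Qed.

Lemma modr (R : comNzRingType) (M X Y a b : R) : 4 * M = 0 -> M * M = 2 * M ->
  X - Y = a * (M * M - 2 * M) + b * (4 * M) -> X = Y.
Proof. move=> h4 hM e; apply/eqP; rewrite -subr_eq0 e h4 hM subrr !mulr0 addr0 //. Qed.

Definition psiB (m x : nat) : nat := if (x < 2 * m)%N then (2 * x + 3 * m + 3)%N else (2 * x - 4 * m)%N.
Definition psiC (m x : nat) : nat :=
  if (x < m)%N then (4 * x + 3)%N else if (x < 2 * m)%N then (4 * (x - m) + 3 * m)%N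
  else if (x < 3 * m)%N then (4 * (x - 2 * m) + m + 3)%N else (4 * (x - 3 * m))%N.
Definition psiBA (m x : nat) : nat := if (x < 2 * m)%N then x.+1 else x.
Definition psiCA (m x : nat) : nat :=
  if (x < m)%N then x.+1 else if (x < 2 * m)%N then (x + m)%N
  else if (x < 3 * m)%N then (x - m + 1)%N else x.
Definition psiCB (m x : nat) : nat :=
  if (x < m)%N then (2 * x + 2)%N else if (x < 2 * m)%N then (2 * (x - m) + 1)%N
  else if (x < 3 * m)%N then (2 * (x - 2 * m) + 2 * m + 1)%N else (2 * (x - 3 * m) + 2 * m)%N.

Definition colv (m j x : nat) : 'Z_(4 * m) :=
  match j with 0 => x%:R | 1 => (m%:R - 1) * (psiB m x)%:R | 2 => (psiC m x)%:R | _ => 0 end.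

Lemma piece (m x : nat) : (x < 4 * m)%N -> exists2 i, (i < m)%N &
  (x = i \/ x = i + m \/ x = i + 2 * m \/ x = i + 3 * m)%N.
Proof.
move=> hx; case: (ltnP x m) => h1; first by exists x => //; left.
case: (ltnP x (2 * m)) => h2; first by exists (x - m)%N; [lia | right; left; lia].
case: (ltnP x (3 * m)) => h3; first by exists (x - 2 * m)%N; [lia | right; right; left; lia].
by exists (x - 3 * m)%N; [lia | right; right; right; lia].
Qed.

Section Main.
Variables (k m : nat).
Hypothesis hm : m = (4 * k + 2)%N.
Local Notation M := (m%:R : 'Z_(4 * m)).

Lemma hn : (1 < 4 * m)%N. Proof. lia. Qed.

Lemma h4 : 4 * M = 0.
Proof.
have := @Zp_mod_eq (4 * m) (4 * m) 0 hn; rewrite modnn mod0n natrM => -> //.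
Qed.

Lemma hMM : M * M = 2 * M.
Proof.
rewrite -!natrM; apply: Zp_mod_eq hn _.
by rewrite (_ : (m * m = k * (4 * m) + 2 * m)%N) ?modnMDl //; rewrite hm; nia.
Qed.

Lemma I1 x : (x < 4 * m)%N -> colv m 1 x - colv m 0 x = (2 * M - 3) * (psiBA m x)%:R.
Proof.
move=> /piece [i hi [->|[->|[->|->]]]] /=.
- have -> : psiB m i = (2 * i + 3 * m + 3)%N by rewrite /psiB; splitifs; lia.
  have -> : psiBA m i = (i + 1)%N by rewrite /psiBA; splitifs; lia.
  by apply: (@modr _ M _ _ 3 1 h4 hMM); ring.
- have -> : psiB m (i + m) = (2 * i + 5 * m + 3)%N by rewrite /psiB; splitifs; lia.
  have -> : psiBA m (i + m) = (i + m + 1)%N by rewrite /psiBA; splitifs; lia.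
  by apply: (@modr _ M _ _ 3 1 h4 hMM); ring.
- have -> : psiB m (i + 2 * m) = (2 * i)%N by rewrite /psiB; splitifs; lia.
  have -> : psiBA m (i + 2 * m) = (i + 2 * m)%N by rewrite /psiBA; splitifs; lia.
  by apply: (@modr _ M _ _ (-4) (-1) h4 hMM); ring.
- have -> : psiB m (i + 3 * m) = (2 * i + 2 * m)%N by rewrite /psiB; splitifs; lia.
  have -> : psiBA m (i + 3 * m) = (i + 3 * m)%N by rewrite /psiBA; splitifs; lia.
  by apply: (@modr _ M _ _ (-4) (-1) h4 hMM); ring.
Qed.

Lemma I2 x : (x < 4 * m)%N -> colv m 2 x - colv m 0 x = 3 * (psiCA m x)%:R.
Proof.
move=> /piece [i hi [->|[->|[->|->]]]] /=.
- have -> : psiC m i = (4 * i + 3)%N by rewrite /psiC; splitifs; lia.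
  have -> : psiCA m i = (i + 1)%N by rewrite /psiCA; splitifs; lia.
  by apply: (@modr _ M _ _ 0 0 h4 hMM); ring.
- have -> : psiC m (i + m) = (4 * i + 3 * m)%N by rewrite /psiC; splitifs; lia.
  have -> : psiCA m (i + m) = (i + 2 * m)%N by rewrite /psiCA; splitifs; lia.
  by apply: (@modr _ M _ _ 0 (-1) h4 hMM); ring.
- have -> : psiC m (i + 2 * m) = (4 * i + m + 3)%N by rewrite /psiC; splitifs; lia.
  have -> : psiCA m (i + 2 * m) = (i + m + 1)%N by rewrite /psiCA; splitifs; lia.
  by apply: (@modr _ M _ _ 0 (-1) h4 hMM); ring.
- have -> : psiC m (i + 3 * m) = (4 * i)%N by rewrite /psiC; splitifs; lia.
  have -> : psiCA m (i + 3 * m) = (i + 3 * m)%N by rewrite /psiCA; splitifs; lia.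
  by apply: (@modr _ M _ _ 0 (-3) h4 hMM); ring.
Qed.

Lemma I3 x : (x < 4 * m)%N -> colv m 2 x - colv m 1 x = (3 - M) * (psiCB m x)%:R.
Proof.
move=> /piece [i hi [->|[->|[->|->]]]] /=.
- have -> : psiC m i = (4 * i + 3)%N by rewrite /psiC; splitifs; lia.
  have -> : psiB m i = (2 * i + 3 * m + 3)%N by rewrite /psiB; splitifs; lia.
  have -> : psiCB m i = (2 * i + 2)%N by rewrite /psiCB; splitifs; lia.
  by apply: (@modr _ M _ _ (-3) (-1) h4 hMM); ring.
- have -> : psiC m (i + m) = (4 * i + 3 * m)%N by rewrite /psiC; splitifs; lia.
  have -> : psiB m (i + m) = (2 * i + 5 * m + 3)%N by rewrite /psiB; splitifs; lia.
  have -> : psiCB m (i + m) = (2 * i + 1)%N by rewrite /psiCB; splitifs; lia.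
  by apply: (@modr _ M _ _ (-5) (-1) h4 hMM); ring.
- have -> : psiC m (i + 2 * m) = (4 * i + m + 3)%N by rewrite /psiC; splitifs; lia.
  have -> : psiB m (i + 2 * m) = (2 * i)%N by rewrite /psiB; splitifs; lia.
  have -> : psiCB m (i + 2 * m) = (2 * i + 2 * m + 1)%N by rewrite /psiCB; splitifs; lia.
  by apply: (@modr _ M _ _ 2 0 h4 hMM); ring.
- have -> : psiC m (i + 3 * m) = (4 * i)%N by rewrite /psiC; splitifs; lia.
  have -> : psiB m (i + 3 * m) = (2 * i + 2 * m)%N by rewrite /psiB; splitifs; lia.
  have -> : psiCB m (i + 3 * m) = (2 * i + 2 * m)%N by rewrite /psiCB; splitifs; lia.
  by apply: (@modr _ M _ _ 0 (-1) h4 hMM); ring.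
Qed.

Hypothesis h3 : ~~ (3 %| m)%N.

Lemma uM1 : M - 1 \is a GRing.unit.
Proof. by apply/unitrP; exists (M - 1); split; apply: (@modr _ M _ _ 1 0 h4 hMM); ring. Qed.

Lemma u1M : 1 + M \is a GRing.unit.
Proof. by apply/unitrP; exists (1 + M); split; apply: (@modr _ M _ _ 1 1 h4 hMM); ring. Qed.

Lemma u3 : (3 : 'Z_(4 * m)) \is a GRing.unit.
Proof.
by rewrite (unitZpE 3 hn) coprime_sym prime_coprime // Gauss_dvdr.
Qed.

Lemma uv : 3 - M \is a GRing.unit.
Proof.
have -> : 3 - M = 3 * (1 + M) by apply: (@modr _ M _ _ 0 (-1) h4 hMM); ring.
by rewrite unitrM u3 u1M.
Qed.

Lemma u2M3 : 2 * M - 3 \is a GRing.unit.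
Proof.
have -> : 2 * M - 3 = (M - 1) * (3 - M) by apply: (@modr _ M _ _ 1 0 h4 hMM); ring.
by rewrite unitrM uM1 uv.
Qed.

Definition R j (i : 'I_(4 * m).+1) : 'Z_(4 * m) := if (i < 4 * m)%N then colv m j i else 0.

Definition Near j j' : Prop := exists (u : 'Z_(4 * m)) (psi : nat -> nat) (x0 : nat),
  [/\ u \is a GRing.unit, (x0 < 4 * m)%N, (forall x, x < 4 * m -> 0 < psi x < 4 * m)%N,
      (forall x y, x < 4 * m -> y < 4 * m -> x != x0 -> y != x0 -> psi x = psi y -> x = y)%N &
      forall x, (x < 4 * m)%N -> colv m j x - colv m j' x = u * (psi x)%:R].

Definition Full j : Prop := exists (u : 'Z_(4 * m)) (psi : nat -> nat),
  [/\ u \is a GRing.unit, (forall x, x < 4 * m -> psi x < 2 * (4 * m))%N,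
      (forall x y, x < 4 * m -> y < 4 * m ->
         psi x = psi y \/ psi x = psi y + 4 * m \/ psi y = psi x + 4 * m -> x = y)%N &
      forall x, (x < 4 * m)%N -> colv m j x = u * (psi x)%:R].

Lemma near_sym j j' : Near j j' -> Near j' j.
Proof.
case=> u [psi [x0 [hu hx0 hb hi he]]]; exists (- u), psi, x0; split => //.
  by rewrite unitrN.
by move=> x hx; rewrite -opprB he // mulNr.
Qed.

Lemma near10 : Near 1 0.
Proof.
exists (2 * M - 3), (psiBA m), (2 * m - 1)%N; split.
- exact: u2M3.
- lia.
- by move=> x hx; rewrite /psiBA; splitifs; lia.
- by move=> x y hx hy hx0 hy0; rewrite /psiBA; splitifs; lia.
- exact: I1.
Qed.

Lemma near20 : Near 2 0.
Proof.
exists 3, (psiCA m), m; split.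
- exact: u3.
- lia.
- by move=> x hx; rewrite /psiCA; splitifs; lia.
- by move=> x y hx hy hx0 hy0; rewrite /psiCA; splitifs; lia.
- exact: I2.
Qed.

Lemma near21 : Near 2 1.
Proof.
exists (3 - M), (psiCB m), (3 * m)%N; split.
- exact: uv.
- lia.
- by move=> x hx; rewrite /psiCB; splitifs; lia.
- by move=> x y hx hy hx0 hy0; rewrite /psiCB; splitifs; lia.
- exact: I3.
Qed.

Lemma full0 : Full 0.
Proof.
exists 1, id; split => //.
- exact: unitr1.
- move=> x hx /=; lia.
- move=> x y hx hy /=; lia.
- by move=> x hx; rewrite mul1r.
Qed.

Lemma full1 : Full 1.
Proof.
exists (M - 1), (psiB m); split => //.
- exact: uM1.
- by move=> x hx; rewrite /psiB; splitifs; lia.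
- by move=> x y hx hy; rewrite /psiB; splitifs; lia.
Qed.

Lemma full2 : Full 2.
Proof.
exists 1, (psiC m); split => //.
- exact: unitr1.
- by move=> x hx; rewrite /psiC; splitifs; lia.
- by move=> x y hx hy; rewrite /psiC; splitifs; lia.
- by move=> x hx; rewrite mul1r.
Qed.

Lemma near_set j j' : Near j j' ->
  [set R j i - R j' i | i : 'I_(4 * m).+1 & (i < 4 * m)%N] = [set g | g != 0].
Proof.
case=> u [psi [x0 [hu hx0 hb hi he]]].
have [hnz hcov] := @cover_near _ _ _ _ hn hu hx0 hb hi.
apply/setP => g; rewrite inE; apply/imsetP/idP.
- case=> i; rewrite inE => hi4 ->; rewrite /R hi4 he //; exact: hnz.
- move=> /hcov [x hx <-]; exists (inord x); first by rewrite inE inordK //; lia.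
  by rewrite /R inordK ?hx ?he //; lia.
Qed.

Lemma near_dca j j' : Near j j' -> forall g, exists i, R j i - R j' i = g.
Proof.
move=> hN g; case: (eqVneq g 0) => [->|hg].
  by exists ord_max; rewrite /R /= ltnn subrr.
have : g \in [set R j i - R j' i | i : 'I_(4 * m).+1 & (i < 4 * m)%N] by rewrite near_set // inE.
by case/imsetP => i _ ->; exists i.
Qed.

Lemma full_cov j : Full j -> forall g, exists i, R j i = g.
Proof.
case=> u [psi [hu hb hi he]] g.
have [x hx <-] := @cover_full _ _ _ hn hu hb hi g.
by exists (inord x); rewrite /R inordK ?hx ?he //; lia.
Qed.

End Main.

Lemma keyNear k m : m = (4 * k + 2)%N -> ~~ (3 %| m)%N -> forall a b : nat,
  (a < 4)%N -> (b < 4)%N -> a != b -> a != 3%N -> b != 3%N -> Near m a b.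
Proof.
move=> hm h3 [|[|[|[|a]]]] [|[|[|[|b]]]] //= _ _ _ _ _.
- exact: near_sym (@near10 k m hm h3).
- exact: near_sym (@near20 k m hm h3).
- exact: (@near10 k m hm h3).
- exact: near_sym (@near21 k m hm h3).
- exact: (@near20 k m hm h3).
- exact: (@near21 k m hm h3).
Qed.

Lemma R3 m i : R m 3 i = 0.
Proof. by rewrite /R; case: ifP. Qed.

Lemma keyDCA k m : m = (4 * k + 2)%N -> ~~ (3 %| m)%N -> forall a b : nat,
  (a < 4)%N -> (b < 4)%N -> a != b -> forall g, exists i, R m a i - R m b i = g.
Proof.
move=> hm h3 a b ha hb hab g.
case: (eqVneq a 3%N) => [ea|na]; last case: (eqVneq b 3%N) => [eb|nb].
- have hfull : Full m b.
    move: hb hab; rewrite ea; case: b => [|[|[|[|b]]]] //= _ _.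
    + exact: (@full0 k m hm h3).
    + exact: (@full1 k m hm h3).
    + exact: (@full2 k m hm h3).
  have [i hi] := @full_cov k m hm h3 _ hfull (- g).
  by exists i; rewrite ea R3 hi sub0r opprK.
- have hfull : Full m a.
    move: ha na; case: a {hab} => [|[|[|[|a]]]] //= _ _.
    + exact: (@full0 k m hm h3).
    + exact: (@full1 k m hm h3).
    + exact: (@full2 k m hm h3).
  have [i hi] := @full_cov k m hm h3 _ hfull g.
  by exists i; rewrite eb R3 hi subr0.
- exact: (@near_dca k m hm h3 _ _ (@keyNear k m hm h3 _ _ ha hb hab na nb) g).
Qed.

Lemma zero_row k m : m = (4 * k + 2)%N -> forall j, (j < 4)%N -> exists2 z, (z < 4 * m)%N & colv m j z = 0.
Proof.
move=> hm [|[|[|[|j]]]] //= _.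
- by exists 0%N => //; lia.
- exists (2 * m)%N; first lia.
  by rewrite (_ : psiB m (2 * m) = 0%N) ?mulr0 //; rewrite /psiB; splitifs; lia.
- exists (3 * m)%N; first lia.
  by rewrite (_ : psiC m (3 * m) = 0%N) //; rewrite /psiC; splitifs; lia.
- by exists 0%N => //; lia.
Qed.

Lemma not3 (k f : nat) : let m := (4 * k + 2)%N in
  gcdn f (4 * m) = 2%N -> gcdn f.-1 (4 * m) = 1%N ->
  (f ^ 2 + f - 2 = 2 * m %[mod 4 * m])%N -> ~~ (3 %| m)%N.
Proof.
move=> m h1 h2 h3; apply/negP => d.
have d4 : (3 %| 4 * m)%N by rewrite dvdn_mull.
have nf : ~~ (3 %| f)%N.
  apply/negP => df; have : (3 %| gcdn f (4 * m))%N by rewrite dvdn_gcd df d4.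
  by rewrite h1.
have nf1 : ~~ (3 %| f.-1)%N.
  apply/negP => df; have : (3 %| gcdn f.-1 (4 * m))%N by rewrite dvdn_gcd df d4.
  by rewrite h2.
move: h3 => /(congr1 (modn^~ 3)); rewrite !modn_dvdm // => e.
have [q hq] : exists q, f = (3 * q + 2)%N by exists (f %/ 3)%N; lia.
have ee : ((3 * q + 2) ^ 2 + (3 * q + 2) - 2 = 3 * (3 * q * q + 5 * q + 1) + 1)%N.
  rewrite expnS expn1; nia.
move: e; rewrite hq ee.
set X := (3 * q * q + 5 * q + 1)%N; move: d; lia.
Qed.

Theorem mainTheorem3 (k f : nat) :
  let m := (4 * k + 2)%N in
  gcdn f (4 * m) = 2%N ->
  gcdn f.-1 (4 * m) = 1%N ->
  (f ^ 2 + f - 2 = 2 * m %[mod 4 * m])%N ->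
  exists Q : 'M['Z_(4 * m)]_((4 * m).+1, 4),
    [/\ is_DCA Q, normalized Q, P1 Q & P2 Q].
Proof.
move=> m h1 h2 h3.
have hm : m = (4 * k + 2)%N by [].
have h3' : ~~ (3 %| m)%N := @not3 k f h1 h2 h3.
exists (\matrix_(i < (4 * m).+1, j < 4) R m j i).
split.
- move=> j j' hjj g.
  have [i hi] := @keyDCA k m hm h3' j j' (ltn_ord j) (ltn_ord j') hjj g.
  by exists i; rewrite !mxE.
- split.
  + by move=> j; rewrite mxE /R ltnn.
  + by move=> i j hj; rewrite mxE hj; exact: R3.
- move=> j; have [z hz hz0] := @zero_row k m hm j (ltn_ord j).
  apply: (@leq_trans #|[set ord_max; (inord z : 'I_(4 * m).+1)]|).
    rewrite cards2; case: eqP => // /(congr1 val) /=; rewrite inordK; lia.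
  apply: subset_leq_card; apply/subsetP => i; rewrite !inE => /orP[]/eqP->; rewrite mxE /R.
    by rewrite ltnn.
  by rewrite inordK ?hz ?hz0 //; lia.
- move=> j j' hjj hj hj'.
  rewrite (_ : [set _ | _ : 'I_(4 * m).+1 & _] =
     [set R m j i - R m j' i | i : 'I_(4 * m).+1 & (i < 4 * m)%N]); last first.
    by apply: eq_imset => i; rewrite !mxE.
  exact: (@near_set k m hm h3' _ _ (@keyNear k m hm h3' _ _ (ltn_ord j) (ltn_ord j') hjj hj hj')).
Qed.
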